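(* Let $M_1$ and $M_2$ be homogeneous monoids. Then the free product $M_1*M_2$ is FCRS if and only if both $M_1$ and $M_2$ are FCRS.
   Context: A monoid is homogeneous if it admits a finite presentation $\langle A\mid\mathcal{R}\rangle$ with $|u|=|v|$ for all $(u,v)\in\mathcal{R}$. A monoid is FCRS if it admits a presentation by a finite complete (noetherian and confluent) string rewriting system over some finite generating set. *)

(* Defs.v *)
From mathcomp Require Import all_boot.
From Stdlib Require Import Relation_Operators.

Set Implicit Arguments. Unset Strict Implicit. Unset Printing Implicit Defensive.

Record monoid := Monoid {
  mcar :> Type;
  mop : mcar -> mcar -> mcar;
  munit : mcar;
  mopA : forall x y z, mop x (mop y z) = mop (mop x y) z;
  mop1x : forall x, mop munit x = x;
  mopx1 : forall x, mop x munit = x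
}.

Definition is_hom (M N : monoid) (f : M -> N) : Prop :=
  f (munit M) = munit N /\ forall x y, f (mop x y) = mop (f x) (f y).

Definition rules (A : finType) := seq (seq A * seq A).

Definition rstep (A : finType) (R : rules A) (u v : seq A) : Prop :=
  exists x y l r, (l, r) \in R /\ u = x ++ l ++ y /\ v = x ++ r ++ y.

Definition rcong (A : finType) (R : rules A) := clos_refl_sym_trans _ (rstep R).

Definition presents (M : monoid) (A : finType) (R : rules A) : Prop :=
  exists phi : seq A -> M,
    phi [::] = munit M /\ (forall u v, phi (u ++ v) = mop (phi u) (phi v)) /\
    (forall m : M, exists u, phi u = m) /\
    (forall u v, phi u = phi v <-> rcong R u v).

Definition homogeneous (M : monoid) : Prop :=
  exists (A : finType) (R : rules A), @presents M A R /\
    forall p, p \in R -> size p.1 = size p.2.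

Definition noetherian (A : finType) (R : rules A) : Prop :=
  well_founded (fun v u => rstep R u v).

Definition confluent (A : finType) (R : rules A) : Prop :=
  forall w u v, clos_refl_trans _ (rstep R) w u -> clos_refl_trans _ (rstep R) w v ->
    exists z, clos_refl_trans _ (rstep R) u z /\ clos_refl_trans _ (rstep R) v z.

Definition FCRS (M : monoid) : Prop :=
  exists (A : finType) (R : rules A), @presents M A R /\ noetherian R /\ confluent R.

Definition is_free_product (M1 M2 P : monoid) (i1 : M1 -> P) (i2 : M2 -> P) : Prop :=
  is_hom i1 /\ is_hom i2 /\
  forall (N : monoid) (f1 : M1 -> N) (f2 : M2 -> N), is_hom f1 -> is_hom f2 ->
    (exists h : P -> N, is_hom h /\ (forall x, h (i1 x) = f1 x) /\ (forall y, h (i2 y) = f2 y)) /\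
    (forall h h' : P -> N, is_hom h -> is_hom h' ->
       (forall x, h (i1 x) = f1 x) -> (forall y, h (i2 y) = f2 y) ->
       (forall x, h' (i1 x) = f1 x) -> (forall y, h' (i2 y) = f2 y) ->
       forall p, h p = h' p).

(* Main.v *)
Require Import Defs.
From mathcomp Require Import all_boot.
From Stdlib Require Import Relation_Operators Operators_Properties ProofIrrelevance ClassicalEpsilon FunctionalExtensionality PropExtensionality.
From mathcomp Require Import zify.
Set Implicit Arguments. Unset Strict Implicit. Unset Printing Implicit Defensive.

Lemma rstep_ctx (A : finType) (R : rules A) p q u v :
  rstep R u v -> rstep R (p ++ u ++ q) (p ++ v ++ q).
Proof.
move=> [x [y [l [r [H [-> ->]]]]]].
exists (p ++ x), (y ++ q), l, r; split => //; by rewrite !catA.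
Qed.

Lemma rcong_ctx (A : finType) (R : rules A) p q u v :
  rcong R u v -> rcong R (p ++ u ++ q) (p ++ v ++ q).
Proof.
elim=> {u v} [u v H|u|u v _ IH|u v w _ IH1 _ IH2].
- by apply: rst_step; apply: rstep_ctx.
- exact: rst_refl.
- exact: rst_sym.
- exact: rst_trans IH2.
Qed.

Lemma rcong_cat (A : finType) (R : rules A) u u' v v' :
  rcong R u u' -> rcong R v v' -> rcong R (u ++ v) (u' ++ v').
Proof.
move=> H1 H2.
apply: (@rst_trans _ _ _ (u' ++ v)).
- by have := rcong_ctx [::] v H1.
- by have := rcong_ctx u' [::] H2; rewrite !cats0.
Qed.

Lemma rtc_rcong (A : finType) (R : rules A) u v :
  clos_refl_trans _ (rstep R) u v -> rcong R u v.
Proof.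
elim=> {u v} [u v H|u|u v w _ IH1 _ IH2]; [exact: rst_step|exact: rst_refl|exact: rst_trans IH2].
Qed.

Lemma church_rosser (A : finType) (R : rules A) u v :
  confluent R -> rcong R u v ->
  exists z, clos_refl_trans _ (rstep R) u z /\ clos_refl_trans _ (rstep R) v z.
Proof.
move=> Hc; elim=> {u v} [u v H|u|u v _ [z [H1 H2]]|u v w _ [z1 [H1 H2]] _ [z2 [H3 H4]]].
- exists v; split; [exact: rt_step|exact: rt_refl].
- exists u; split; exact: rt_refl.
- by exists z.
- have [z [H5 H6]] := Hc _ _ _ H2 H3.
  exists z; split; [exact: rt_trans H5|exact: rt_trans H6].
Qed.

Lemma presents_rule (M : monoid) (A : finType) (R : rules A) phi l r :
  (forall u v, phi u = phi v <-> rcong R u v) -> (l, r) \in R -> phi l = phi r :> M.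
Proof.
move=> H lr; apply/H; apply: rst_step; exists [::], [::], l, r; by rewrite /= !cats0.
Qed.
Lemma sig_eqP (T : Type) (S : T -> Prop) (x y : {p | S p}) : proj1_sig x = proj1_sig y -> x = y.
Proof. case: x => a Ha; case: y => b Hb /= E; subst b; f_equal; apply: proof_irrelevance. Qed.

Definition submon (P : monoid) (S : P -> Prop) (S1 : S (munit P))
  (SM : forall p q, S p -> S q -> S (mop p q)) : monoid.
refine (@Defs.Monoid {p | S p} (fun x y => exist _ (mop (proj1_sig x) (proj1_sig y)) (SM _ _ (proj2_sig x) (proj2_sig y)))
   (exist _ (munit P) S1) _ _ _).
- by move=> x y z; apply: sig_eqP => /=; rewrite mopA.
- by move=> x; apply: sig_eqP => /=; rewrite mop1x.
- by move=> x; apply: sig_eqP => /=; rewrite mopx1.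
Defined.

Lemma free_product_ind (M1 M2 P : monoid) (i1 : M1 -> P) (i2 : M2 -> P) (S : P -> Prop) :
  is_free_product i1 i2 -> S (munit P) -> (forall p q, S p -> S q -> S (mop p q)) ->
  (forall x, S (i1 x)) -> (forall y, S (i2 y)) -> forall p, S p.
Proof.
move=> [h1 [h2 U]] S1 SM Si1 Si2.
pose N := submon S1 SM.
pose f1 := fun x => (exist S (i1 x) (Si1 x) : N).
pose f2 := fun y => (exist S (i2 y) (Si2 y) : N).
have hf1 : is_hom f1.
  split; first by apply: sig_eqP => /=; case: h1.
  by move=> x y; apply: sig_eqP => /=; case: h1 => _ ->.
have hf2 : is_hom f2.
  split; first by apply: sig_eqP => /=; case: h2.
  by move=> x y; apply: sig_eqP => /=; case: h2 => _ ->.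
have [[h [hh [e1 e2]]] _] := U N f1 f2 hf1 hf2.
have [_ uniq] := U P i1 i2 h1 h2.
have hv : is_hom (fun p => proj1_sig (h p)).
  split; first by case: hh => -> .
  by move=> x y; case: hh => _ ->.
have hid : is_hom (fun p : P => p) by [].
move=> p.
have E := uniq _ _ hv hid (fun x => f_equal (@proj1_sig _ _) (e1 x)) (fun y => f_equal (@proj1_sig _ _) (e2 y))
  (fun x => erefl) (fun y => erefl) p.
rewrite -E; exact: proj2_sig.
Qed.

Lemma free_product_swap (M1 M2 P : monoid) (i1 : M1 -> P) (i2 : M2 -> P) :
  is_free_product i1 i2 -> is_free_product i2 i1.
Proof.
move=> [h1 [h2 U]]; split => //; split => // N f2 f1 hf2 hf1.
have [[h [hh [e1 e2]]] uq] := U N f1 f2 hf1 hf2.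
split; first by exists h.
move=> g g' hg hg' a b c d; exact: uq.
Qed.

Definition natM : monoid := @Defs.Monoid nat addn 0 addnA add0n addn0.

Lemma rcong_size (A : finType) (R : rules A) u v :
  (forall p, p \in R -> size p.1 = size p.2) -> rcong R u v -> size u = size v.
Proof.
move=> Hs; elim=> {u v} [u v [x [y [l [r [H [-> ->]]]]]]|//|//|u v w _ -> _ ->//].
by rewrite !size_cat (Hs _ H).
Qed.

Lemma homog_deg (M : monoid) : homogeneous M ->
  exists d : M -> natM, is_hom d /\ (forall y, d y = 0 -> y = munit M).
Proof.
move=> [A [R [[phi [p0 [pM [ps pk]]]] Hs]]].
pose rep y := proj1_sig (constructive_indefinite_description _ (ps y)).
have repE y : phi (rep y) = y := proj2_sig (constructive_indefinite_description _ (ps y)).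
exists (fun y => size (rep y)); split; first split.
- have /pk /(rcong_size Hs) : phi (rep (munit M)) = phi [::] by rewrite repE p0.
  by move=> ->.
- move=> x y /=.
  have /pk /(rcong_size Hs) : phi (rep (mop x y)) = phi (rep x ++ rep y) by rewrite pM !repE.
  by rewrite size_cat.
- move=> y /size0nil E; by rewrite -(repE y) E p0.
Qed.

Lemma map_val_pmap_insub (T : Type) (g : pred T) (s : seq T) :
  all g s -> map val (pmap (insub : T -> option {x | g x}) s) = s.
Proof.
elim: s => //= a s IH /andP[ga gs].
by rewrite insubT /= IH.
Qed.

Lemma fcrs_left (M1 M2 P : monoid) (i1 : M1 -> P) (i2 : M2 -> P) :
  homogeneous M2 -> is_free_product i1 i2 -> FCRS P -> FCRS M1.
Proof.
move=> /homog_deg [d [hd d0]] FP.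
have FP' := FP; move: FP' => [h1 [h2 U]].
have hz : is_hom (fun _ : M1 => (0 : natM)) by [].
have [[deg2 [hdeg [deg2_1 deg2_2]]] _] := U natM _ _ hz hd.
have hid : is_hom (fun x : M1 => x) by [].
have hu : is_hom (fun _ : M2 => munit M1) by split => // x y; rewrite mop1x.
have [[pi1 [hpi [pi1_1 pi1_2]]] _] := U M1 _ _ hid hu.
have key : forall p, deg2 p = 0 -> p = i1 (pi1 p).
  apply: (free_product_ind FP).
  - by move=> _; case: hpi => -> _; case: h1 => -> _.
  - move=> p q Hp Hq; case: hdeg => _ ->; move/eqP; rewrite addn_eq0 => /andP[/eqP/Hp Ep /eqP/Hq Eq].
    by case: hpi => _ ->; case: h1 => _ ->; rewrite -Ep -Eq.
  - by move=> x _; rewrite pi1_1.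
  - move=> y; rewrite deg2_2 => /d0 ->; rewrite pi1_2; case: h1 => -> _; by case: h2 => -> _.
case=> B [R [[phi [p0 [pM [ps pk]]]] [Hn Hc]]].
pose good := fun b : B => deg2 (phi [:: b]) == 0.
have goodE : forall w, all good w = (deg2 (phi w) == 0).
  elim=> [|b w IH]; first by rewrite /= p0; case: hdeg => -> _.
  by rewrite -cat1s pM; case: hdeg => _ ->; rewrite addn_eq0 /= IH.
pose B1 := {b : B | good b}.
pose lift := fun s : seq B => pmap (insub : B -> option B1) s.
pose R1 : rules {b : B | good b} := [seq (lift p.1, lift p.2) | p <- R & all good p.1 && all good p.2].
have phiR : forall l r, (l, r) \in R -> phi l = phi r by move=> l r; apply: presents_rule.
have allv : forall u' : seq B1, all good (map val u').
  by move=> u'; rewrite all_map; apply/allP => b _ /=; exact: valP.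
have liftK : forall s, all good s -> map val (lift s) = s by move=> s; exact: map_val_pmap_insub.
have stepA : forall (u' : seq B1) v, rstep R (map val u') v -> exists v', v = map val v' /\ rstep R1 u' v'.
  move=> u' v [x [y [l [r [H [Eu ->]]]]]].
  have := allv u'; rewrite Eu !all_cat => /and3P[gx gl gy].
  have gr : all good r by rewrite goodE -(phiR _ _ H) -goodE.
  exists (lift x ++ lift r ++ lift y); split; first by rewrite !map_cat !liftK.
  exists (lift x), (lift y), (lift l), (lift r); split.
    by apply/mapP; exists (l, r) => //; rewrite mem_filter /= gl gr.
  split => //; apply: (inj_map val_inj); by rewrite !map_cat !liftK.
have stepB : forall u' v' : seq B1, rstep R1 u' v' -> rstep R (map val u') (map val v').
  move=> u' v' [x [y [l [r [H [-> ->]]]]]].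
  move: H => /mapP[[l0 r0]]; rewrite mem_filter /= => /andP[/andP[gl gr] H] [-> ->].
  exists (map val x), (map val y), l0, r0; split => //; by rewrite !map_cat !liftK.
have rtcA : forall (u' : seq B1) w, clos_refl_trans _ (rstep R) (map val u') w ->
    exists w', w = map val w' /\ clos_refl_trans _ (rstep R1) u' w'.
  suff gen : forall a w, clos_refl_trans_1n _ (rstep R) a w -> forall u', a = map val u' ->
      exists w', w = map val w' /\ clos_refl_trans _ (rstep R1) u' w'.
    by move=> u' w /clos_rt_rt1n_iff H; apply: gen H u' erefl.
  move=> a w H; elim: H => {a w} [a|a b c Hab _ IH] u' Eu.
    by exists u'; split; [rewrite Eu|apply: rt_refl].
  rewrite Eu in Hab; have [b' [Eb Hb]] := stepA _ _ Hab.
  have [w' [Ew Hw]] := IH b' Eb.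
  exists w'; split => //; apply: rt_trans Hw; exact: rt_step.
have rtcB : forall u' v' : seq B1, clos_refl_trans _ (rstep R1) u' v' ->
    clos_refl_trans _ (rstep R) (map val u') (map val v').
  move=> u' v'; elim=> {u' v'} [u v H|u|u v w _ IH1 _ IH2].
  - exact/rt_step/stepB.
  - exact: rt_refl.
  - exact: rt_trans IH2.
have Hn1 : noetherian R1.
  suff gen : forall a, Acc (fun v u => rstep R u v) a -> forall u', a = map val u' ->
      Acc (fun v u => rstep R1 u v) u'.
    by move=> u'; apply: gen (Hn _) u' erefl.
  move=> a H; elim: H => {a} a _ IH u' Ea; constructor => v' Hv.
  apply: (IH (map val v')) => //; rewrite Ea; exact: stepB.
have Hc1 : confluent R1.
  move=> w u v /rtcB Hu /rtcB Hv.
  have [z [Hz1 Hz2]] := Hc _ _ _ Hu Hv.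
  have [z1 [E1 H1]] := rtcA _ _ Hz1.
  have [z2 [E2 H2]] := rtcA _ _ Hz2.
  have E : z1 = z2 by apply: (inj_map val_inj); rewrite -E1 -E2.
  by exists z1; split => //; rewrite E.
exists {b : B | good b}, R1; split => //.
have keyv : forall u' : seq B1, phi (map val u') = i1 (pi1 (phi (map val u'))).
  by move=> u'; apply: key; apply/eqP; rewrite -goodE allv.
exists (fun u' => pi1 (phi (map val u'))); split; last split; last split.
- by rewrite /= p0; case: hpi.
- by move=> u v; rewrite map_cat pM; case: hpi => _ ->.
- move=> m; have [w Ew] := ps (i1 m).
  have gw : all good w by rewrite goodE Ew deg2_1.
  by exists (lift w); rewrite liftK // Ew pi1_1.
- move=> u v; split.
  + move=> E; have /pk H : phi (map val u) = phi (map val v) by rewrite keyv E -keyv.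
    have [z [Hz1 Hz2]] := church_rosser Hc H.
    have [z1 [E1 H1]] := rtcA _ _ Hz1.
    have [z2 [E2 H2]] := rtcA _ _ Hz2.
    have E' : z1 = z2 by apply: (inj_map val_inj); rewrite -E1 -E2.
    apply: rst_trans (rtc_rcong H1) _; rewrite E'; apply: rst_sym; exact: rtc_rcong.
  + elim=> {u v} [u v H|//|u v _ ->//|u v w _ -> _ ->//].
    by congr pi1; apply/pk/rst_step/stepB.
Qed.


Lemma rstep_map (A B : finType) (f : A -> B) (R : rules A) (R' : rules B) s t :
  (forall p, p \in R -> (map f p.1, map f p.2) \in R') -> rstep R s t -> rstep R' (map f s) (map f t).
Proof.
move=> HR [x [y [l [r [H [-> ->]]]]]].
exists (map f x), (map f y), (map f l), (map f r); split; first exact: (HR (l, r)).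
by rewrite !map_cat.
Qed.

Lemma rcong_map (A B : finType) (f : A -> B) (R : rules A) (R' : rules B) s t :
  (forall p, p \in R -> (map f p.1, map f p.2) \in R') -> rcong R s t -> rcong R' (map f s) (map f t).
Proof.
move=> HR; elim=> {s t} [u v H|u|u v _ IH|u v w _ IH1 _ IH2].
- apply: rst_step; exact: rstep_map HR H.
- exact: rst_refl.
- exact: rst_sym.
- exact: rst_trans IH2.
Qed.

Definition qop (A : finType) (R : rules A) (S T : seq A -> Prop) : seq A -> Prop :=
  fun w => exists u v, S u /\ T v /\ rcong R (u ++ v) w.

Lemma qopE (A : finType) (R : rules A) u v : qop R (rcong R u) (rcong R v) = rcong R (u ++ v).
Proof.
apply: functional_extensionality => w; apply: propositional_extensionality; split.
- move=> [u' [v' [H1 [H2 H3]]]]; apply: rst_trans H3; exact: rcong_cat.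
- move=> H; exists u, v; split; [exact: rst_refl|split; [exact: rst_refl|exact: H]].
Qed.

Definition Qcar (A : finType) (R : rules A) := {S : seq A -> Prop | exists u, S = rcong R u}.

Lemma qmul_proof (A : finType) (R : rules A) (x y : Qcar R) :
  exists w, qop R (proj1_sig x) (proj1_sig y) = rcong R w.
Proof. case: x => S [u Su]; case: y => T [v Tv] /=; exists (u ++ v); rewrite Su Tv; exact: qopE. Qed.

Definition qmul (A : finType) (R : rules A) (x y : Qcar R) : Qcar R :=
  exist _ (qop R (proj1_sig x) (proj1_sig y)) (qmul_proof x y).

Definition Qmon (A : finType) (R : rules A) : monoid.
refine (@Defs.Monoid (Qcar R) (@qmul A R)
  (exist _ (rcong R [::]) (ex_intro _ [::] erefl)) _ _ _).
- case=> S [u Su]; case=> T [v Tv]; case=> U [w Uw]; apply: sig_eqP => /=.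
  by rewrite Su Tv Uw !qopE catA.
- case=> S [u Su]; apply: sig_eqP => /=; by rewrite Su qopE.
- case=> S [u Su]; apply: sig_eqP => /=; by rewrite Su qopE cats0.
Defined.

Definition qcls (A : finType) (R : rules A) (u : seq A) : Qmon R :=
  exist _ (rcong R u) (ex_intro _ u erefl).

Lemma qclsM (A : finType) (R : rules A) u v : mop (qcls R u) (qcls R v) = qcls R (u ++ v).
Proof. apply: sig_eqP => /=; exact: qopE. Qed.

Lemma qcls1 (A : finType) (R : rules A) : munit (Qmon R) = qcls R [::].
Proof. by []. Qed.

Lemma qcls_eq (A : finType) (R : rules A) u v : rcong R u v -> qcls R u = qcls R v.
Proof.
move=> H; apply: sig_eqP => /=; apply: functional_extensionality => w.
apply: propositional_extensionality; split => H'.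
- apply: rst_trans H'; exact: rst_sym.
- exact: rst_trans H'.
Qed.

Lemma qcls_inj (A : finType) (R : rules A) u v : qcls R u = qcls R v -> rcong R u v.
Proof.
move=> /(f_equal (@proj1_sig _ _)) /= E; rewrite E; exact: rst_refl.
Qed.

Lemma quot_hom (M : monoid) (A B : finType) (R : rules A) (R' : rules B) (f : A -> B)
  (phi : seq A -> M) :
  phi [::] = munit M -> (forall u v, phi (u ++ v) = mop (phi u) (phi v)) ->
  (forall m : M, exists u, phi u = m) -> (forall u v, phi u = phi v <-> rcong R u v) ->
  (forall p, p \in R -> (map f p.1, map f p.2) \in R') ->
  exists g : M -> Qmon R', is_hom g /\ forall s, g (phi s) = qcls R' (map f s).
Proof.
move=> p0 pM ps pk HR.
pose rep m := proj1_sig (constructive_indefinite_description _ (ps m)).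
have repE m : phi (rep m) = m := proj2_sig (constructive_indefinite_description _ (ps m)).
have gE : forall s, qcls R' (map f (rep (phi s))) = qcls R' (map f s).
  move=> s; apply: qcls_eq; apply: rcong_map HR _; apply/pk; by rewrite repE.
exists (fun m => qcls R' (map f (rep m))); split; last by move=> s; exact: gE.
split.
- by rewrite -p0 gE.
- move=> x y; rewrite -(repE x) -(repE y) -pM !gE qclsM; by rewrite map_cat.
Qed.

Definition liftR (A1 A2 : finType) (R1 : rules A1) (R2 : rules A2) : rules (A1 + A2)%type :=
  [seq (map inl p.1, map inl p.2) | p <- R1] ++ [seq (map inr p.1, map inr p.2) | p <- R2].

Lemma liftR_l (A1 A2 : finType) (R1 : rules A1) (R2 : rules A2) p :
  p \in R1 -> (map inl p.1, map inl p.2) \in liftR R1 R2.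
Proof. by move=> H; rewrite mem_cat; apply/orP; left; apply/mapP; exists p. Qed.

Lemma liftR_r (A1 A2 : finType) (R1 : rules A1) (R2 : rules A2) p :
  p \in R2 -> (map inr p.1, map inr p.2) \in liftR R1 R2.
Proof. by move=> H; rewrite mem_cat; apply/orP; right; apply/mapP; exists p. Qed.

Lemma presents_fp (M1 M2 P : monoid) (i1 : M1 -> P) (i2 : M2 -> P)
  (A1 A2 : finType) (R1 : rules A1) (R2 : rules A2) :
  presents M1 R1 -> presents M2 R2 -> is_free_product i1 i2 -> presents P (liftR R1 R2).
Proof.
move=> [phi1 [p10 [p1M [ps1 pk1]]]] [phi2 [p20 [p2M [ps2 pk2]]]] FP.
have FP' := FP; move: FP' => [h1 [h2 U]].
pose letter (c : (A1 + A2)%type) := match c with inl a => i1 (phi1 [:: a]) | inr b => i2 (phi2 [:: b]) end.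
pose phi := fun w : seq (A1 + A2)%type => foldr (fun c acc => mop (letter c) acc) (munit P) w.
have pM : forall u v, phi (u ++ v) = mop (phi u) (phi v).
  elim=> [|c u IH] v /=; first by rewrite mop1x.
  by rewrite IH mopA.
have pl : forall s, phi (map inl s) = i1 (phi1 s).
  elim=> [|a s IH] /=; first by rewrite p10; case: h1.
  by rewrite IH -[a :: s]cat1s p1M; case: h1 => _ ->.
have pr : forall s, phi (map inr s) = i2 (phi2 s).
  elim=> [|a s IH] /=; first by rewrite p20; case: h2.
  by rewrite IH -[a :: s]cat1s p2M; case: h2 => _ ->.
exists phi; split => //; split => //; split.
  apply: (free_product_ind FP).
  - by exists [::].
  - by move=> p q [u <-] [v <-]; exists (u ++ v).
  - by move=> x; have [s <-] := ps1 x; exists (map inl s).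
  - by move=> y; have [s <-] := ps2 y; exists (map inr s).
move=> u v; split; last first.
  elim=> {u v} [u v H|//|u v _ ->//|u v w _ -> _ ->//].
  move: H => [x [y [l [r [H [-> ->]]]]]]; rewrite !pM; congr (mop _ (mop _ _)).
  move: H; rewrite mem_cat => /orP[] /mapP[[l0 r0] H [-> ->]] /=.
  - by rewrite !pl; congr i1; apply: presents_rule pk1 H.
  - by rewrite !pr; congr i2; apply: presents_rule pk2 H.
have [g1 [hg1 g1E]] := quot_hom p10 p1M ps1 pk1 (@liftR_l A1 A2 R1 R2).
have [g2 [hg2 g2E]] := quot_hom p20 p2M ps2 pk2 (@liftR_r A1 A2 R1 R2).
have [[h [hh [e1 e2]]] _] := U _ _ _ hg1 hg2.
have hE : forall w, h (phi w) = qcls (liftR R1 R2) w.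
  elim=> [|c w IH] /=; first by case: hh.
  case: hh => _ ->; rewrite IH; case: c => [a|b] /=.
  - by rewrite e1 g1E; exact: (qclsM _ [:: inl a] w).
  - by rewrite e2 g2E; exact: (qclsM _ [:: inr b] w).
by move=> E; apply: qcls_inj; rewrite -!hE E.
Qed.


Definition rtc (T : Type) (r : T -> T -> Prop) := clos_refl_trans T r.

Lemma rtc_ind1 (T : Type) (r : T -> T -> Prop) (P : T -> T -> Prop) :
  (forall a, P a a) -> (forall a b c, r a b -> rtc r b c -> P b c -> P a c) ->
  forall a b, rtc r a b -> P a b.
Proof.
move=> H0 HS a b /clos_rt_rt1n_iff H; elim: H => [x|x y z Hxy Hyz IH]; first exact: H0.
apply: HS Hxy _ IH; exact/clos_rt_rt1n_iff.
Qed.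

Lemma diamond_strip (T : Type) (X : T -> T -> Prop) :
  (forall a b c, X a b -> X a c -> exists d, X b d /\ X c d) ->
  forall a c, rtc X a c -> forall b, X a b -> exists d, rtc X b d /\ X c d.
Proof.
move=> Hd; apply: rtc_ind1 => [a b H|a a' c Ha' _ IH b Hb].
  by exists b; split; [apply: rt_refl|].
have [d [H1 H2]] := Hd _ _ _ Hb Ha'.
have [e [H3 H4]] := IH _ H2.
exists e; split => //; apply: rt_trans H3; exact: rt_step.
Qed.

Lemma diamond_conf (T : Type) (X : T -> T -> Prop) :
  (forall a b c, X a b -> X a c -> exists d, X b d /\ X c d) ->
  forall a b c, rtc X a b -> rtc X a c -> exists d, rtc X b d /\ rtc X c d.
Proof.
move=> Hd a b c Hb; move: a b Hb c; apply: rtc_ind1 => [a c Hc|a a' b Ha' _ IH c Hc].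
  by exists c; split; [|apply: rt_refl].
have [d [H1 H2]] := diamond_strip Hd Hc Ha'.
have [e [H3 H4]] := IH _ H1.
exists e; split => //; apply: rt_trans H4; exact: rt_step.
Qed.

Lemma comm_strip (T : Type) (r1 r2 : T -> T -> Prop) :
  (forall a b c, r1 a b -> r2 a c -> exists d, r2 b d /\ r1 c d) ->
  forall a c, rtc r2 a c -> forall b, r1 a b -> exists d, rtc r2 b d /\ r1 c d.
Proof.
move=> Hd; apply: rtc_ind1 => [a b H|a a' c Ha' _ IH b Hb].
  by exists b; split; [apply: rt_refl|].
have [d [H1 H2]] := Hd _ _ _ Hb Ha'.
have [e [H3 H4]] := IH _ H2.
exists e; split => //; apply: rt_trans H3; exact: rt_step.
Qed.

Lemma comm_rtc (T : Type) (r1 r2 : T -> T -> Prop) :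
  (forall a b c, r1 a b -> r2 a c -> exists d, r2 b d /\ r1 c d) ->
  forall a b c, rtc r1 a b -> rtc r2 a c -> exists d, rtc r2 b d /\ rtc r1 c d.
Proof.
move=> Hd a b c Hb; move: a b Hb c; apply: rtc_ind1 => [a c Hc|a a' b Ha' _ IH c Hc].
  by exists c; split; [|apply: rt_refl].
have [d [H1 H2]] := comm_strip Hd Hc Ha'.
have [e [H3 H4]] := IH _ H1.
exists e; split => //; apply: rt_trans H4; exact: rt_step.
Qed.

Lemma rtc_mono (T : Type) (r s : T -> T -> Prop) :
  (forall a b, r a b -> s a b) -> forall a b, rtc r a b -> rtc s a b.
Proof.
move=> H a b; elim=> [x y /H|x|x y z _ IH1 _ IH2]; [exact: rt_step|exact: rt_refl|exact: rt_trans IH2].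
Qed.

Lemma hindley_rosen (T : Type) (r1 r2 : T -> T -> Prop) :
  (forall a b c, rtc r1 a b -> rtc r1 a c -> exists d, rtc r1 b d /\ rtc r1 c d) ->
  (forall a b c, rtc r2 a b -> rtc r2 a c -> exists d, rtc r2 b d /\ rtc r2 c d) ->
  (forall a b c, r1 a b -> r2 a c -> exists d, r2 b d /\ r1 c d) ->
  forall a b c, rtc (fun x y => r1 x y \/ r2 x y) a b -> rtc (fun x y => r1 x y \/ r2 x y) a c ->
  exists d, rtc (fun x y => r1 x y \/ r2 x y) b d /\ rtc (fun x y => r1 x y \/ r2 x y) c d.
Proof.
move=> C1 C2 Cm.
pose X := fun x y => rtc r1 x y \/ rtc r2 x y.
have toX : forall a b, rtc (fun x y => r1 x y \/ r2 x y) a b -> rtc X a b.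
  apply: rtc_mono => a b [H|H]; [left|right]; exact: rt_step.
have fromX : forall a b, rtc X a b -> rtc (fun x y => r1 x y \/ r2 x y) a b.
  move=> a b; elim=> [x y [H|H]|x|x y z _ IH1 _ IH2]; [| |exact: rt_refl|exact: rt_trans IH2].
  - by apply: rtc_mono H => ? ? ?; left.
  - by apply: rtc_mono H => ? ? ?; right.
have HX : forall a b c, X a b -> X a c -> exists d, X b d /\ X c d.
  move=> a b c [Hb|Hb] [Hc|Hc].
  - by have [d [? ?]] := C1 _ _ _ Hb Hc; exists d; split; left.
  - by have [d [? ?]] := comm_rtc Cm Hb Hc; exists d; split; [right|left].
  - by have [d [? ?]] := comm_rtc Cm Hc Hb; exists d; split; [left|right].
  - by have [d [? ?]] := C2 _ _ _ Hb Hc; exists d; split; right.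
move=> a b c /toX Hb /toX Hc.
have [d [H1 H2]] := diamond_conf HX Hb Hc.
by exists d; split; apply: fromX.
Qed.


Lemma split_redex (T : eqType) (x l y s t : seq T) (c : T) :
  c \notin l -> x ++ l ++ y = s ++ c :: t ->
  (exists m, s = x ++ l ++ m /\ y = m ++ c :: t) \/ (exists m, x = s ++ c :: m /\ t = m ++ l ++ y).
Proof.
move=> cl; elim: x s => [|b x IH] s /=.
  elim: l s cl => [|a l IHl] s cl /=.
    by move=> E; left; exists s; split.
  move: cl; rewrite in_cons negb_or => /andP[ca cl'].
  case: s => [|a' s] /=; first by case=> E; rewrite E eqxx in ca.
  case=> <- E; have [[m [-> ->]]|[m [E' _]]] := IHl _ cl' E.
  - by left; exists m.
  - by case: s E' E.
case: s => [|b' s] /=.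
  by case=> -> <-; right; exists x.
case=> <- /IH [[m [-> ->]]|[m [-> ->]]].
- by left; exists m.
- by right; exists m.
Qed.

Lemma rtc_ctx (A : finType) (R : rules A) p q u v :
  rtc (rstep R) u v -> rtc (rstep R) (p ++ u ++ q) (p ++ v ++ q).
Proof.
elim=> [a b H|a|a b c _ IH1 _ IH2]; [exact/rt_step/rstep_ctx|exact: rt_refl|exact: rt_trans IH2].
Qed.

Lemma rtc_split (A : finType) (R : rules A) (Q : pred A) s c t w :
  (forall p, p \in R -> all Q p.1) -> ~~ Q c ->
  rtc (rstep R) (s ++ c :: t) w ->
  exists s' t', w = s' ++ c :: t' /\ rtc (rstep R) s s' /\ rtc (rstep R) t t'.
Proof.
move=> HQ Qc H.
suff gen : forall a w, rtc (rstep R) a w -> forall s t, a = s ++ c :: t ->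
  exists s' t', w = s' ++ c :: t' /\ rtc (rstep R) s s' /\ rtc (rstep R) t t'.
  exact: gen H s t erefl.
apply: rtc_ind1 => [a s0 t0 ->|a b w' Hab _ IH s0 t0 Ea].
  by exists s0, t0; split => //; split; apply: rt_refl.
move: Hab => [x [y [l [r [Hl [Ea' Eb]]]]]].
have cl : c \notin l.
  apply/negP => /(allP (HQ _ Hl)) Qc'; by rewrite Qc' in Qc.
rewrite Ea' in Ea; have [[m [E1 E2]]|[m [E1 E2]]] := split_redex cl Ea.
- have E : b = (x ++ r ++ m) ++ c :: t0 by rewrite Eb E2 -!catA.
  have [s' [t' [Ew [H1 H2]]]] := IH _ _ E.
  exists s', t'; split => //; split => //; apply: rt_trans H1; rewrite E1.
  by apply: rt_step; exists x, m, l, r.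
- have E : b = s0 ++ c :: (m ++ r ++ y) by rewrite Eb E1 -catA.
  have [s' [t' [Ew [H1 H2]]]] := IH _ _ E.
  exists s', t'; split => //; split => //; apply: rt_trans H2; rewrite E2.
  by apply: rt_step; exists m, y, l, r.
Qed.

Lemma conf_blocks (A : finType) (R : rules A) (Q : pred A) :
  (forall p, p \in R -> all Q p.1) ->
  (forall w u v, all Q w -> rtc (rstep R) w u -> rtc (rstep R) w v ->
     exists z, rtc (rstep R) u z /\ rtc (rstep R) v z) ->
  confluent R.
Proof.
move=> HQ HC w.
have [n] : exists n, size w < n by exists (size w).+1.
elim: n w => [//|n IH] w Hw u v Hu Hv.
have [Hall|] := boolP (all Q w); first exact: HC Hu Hv.
case/allPn => c cw Qc; case/splitPr: cw Hw Hu Hv => s t Hw Hu Hv.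
rewrite size_cat /= in Hw.
have [su [tu [-> [Hsu Htu]]]] := rtc_split HQ Qc Hu.
have [sv [tv [-> [Hsv Htv]]]] := rtc_split HQ Qc Hv.
have Hs : size s < n by rewrite ltnS in Hw; apply: leq_trans Hw; rewrite addnS ltnS leq_addr.
have Ht : size t < n by rewrite ltnS in Hw; apply: leq_trans Hw; rewrite addnS ltnS leq_addl.
have [zs [H1 H2]] := IH s Hs _ _ Hsu Hsv.
have [zt [H3 H4]] := IH t Ht _ _ Htu Htv.
exists (zs ++ c :: zt); split.
- apply: rt_trans (_ : rtc _ _ (zs ++ c :: tu)) _.
    by have := rtc_ctx [::] (c :: tu) H1.
  by have := rtc_ctx (zs ++ [:: c]) [::] H3; rewrite !cats0 -!catA.
- apply: rt_trans (_ : rtc _ _ (zs ++ c :: tv)) _.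
    by have := rtc_ctx [::] (c :: tv) H2.
  by have := rtc_ctx (zs ++ [:: c]) [::] H4; rewrite !cats0 -!catA.
Qed.


Definition mapR (A B : finType) (f : A -> B) (R : rules A) : rules B :=
  [seq (map f p.1, map f p.2) | p <- R].

Lemma mapR_mem (A B : finType) (f : A -> B) (R : rules A) p :
  p \in R -> (map f p.1, map f p.2) \in mapR f R.
Proof. by move=> H; apply/mapP; exists p. Qed.

Lemma pmap_mapK (A B : Type) (f : A -> B) (g : B -> option A) s :
  pcancel f g -> pmap g (map f s) = s.
Proof. by move=> hc; elim: s => //= a s ->; rewrite hc. Qed.

Lemma pmap_map0 (A B C : Type) (f : A -> B) (g : B -> option C) s :
  (forall a, g (f a) = None) -> pmap g (map f s) = [::].
Proof. by move=> hc; elim: s => //= a s ->; rewrite hc. Qed.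

Lemma all_mapK (A B : Type) (f : A -> B) (g : B -> option A) w :
  (forall b a, g b = Some a -> f a = b) -> all (fun b => g b) w -> w = map f (pmap g w).
Proof.
move=> hc; elim: w => //= b w IH /andP[gb gw].
case E: (g b) gb => [a|//] _ /=; by rewrite (hc _ _ E) -IH.
Qed.

Lemma L_step (A B : finType) (f : A -> B) (g : B -> option A) (R : rules A) s v :
  pcancel f g -> (forall b a, g b = Some a -> f a = b) ->
  rstep (mapR f R) (map f s) v -> exists s', v = map f s' /\ rstep R s s'.
Proof.
move=> hc hc' [x [y [l [r [/mapP[[l0 r0] H [-> ->]] [Eu ->]]]]]] /=.
have allf : all (fun b => g b) (map f s) by rewrite all_map; apply/allP => a _ /=; rewrite hc.
move: (allf); rewrite Eu !all_cat => /and3P[gx _ gy].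
rewrite (all_mapK hc' gx) (all_mapK hc' gy).
exists (pmap g x ++ r0 ++ pmap g y); split; first by rewrite !map_cat.
exists (pmap g x), (pmap g y), l0, r0; split => //; split => //.
by rewrite -(pmap_mapK s hc) Eu !pmap_cat (pmap_mapK _ hc).
Qed.

Lemma L_rtc (A B : finType) (f : A -> B) (g : B -> option A) (R : rules A) s u :
  pcancel f g -> (forall b a, g b = Some a -> f a = b) ->
  rtc (rstep (mapR f R)) (map f s) u -> exists s', u = map f s' /\ rtc (rstep R) s s'.
Proof.
move=> hc hc' H.
suff gen : forall a u, rtc (rstep (mapR f R)) a u -> forall s, a = map f s ->
    exists s', u = map f s' /\ rtc (rstep R) s s' by exact: gen H s erefl.
apply: rtc_ind1 => [a s0 ->|a b c Hab _ IH s0 Ea].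
  by exists s0; split => //; apply: rt_refl.
rewrite Ea in Hab; have [b' [Eb Hb]] := L_step hc hc' Hab.
have [c' [Ec Hc]] := IH _ Eb.
exists c'; split => //; apply: rt_trans Hc; exact: rt_step.
Qed.

Lemma rtc_mapR (A B : finType) (f : A -> B) (R : rules A) s t :
  rtc (rstep R) s t -> rtc (rstep (mapR f R)) (map f s) (map f t).
Proof.
elim=> [a b H|a|a b c _ IH1 _ IH2]; [|exact: rt_refl|exact: rt_trans IH2].
by apply: rt_step; apply: rstep_map H => p; exact: mapR_mem.
Qed.

Lemma L_conf (A B : finType) (f : A -> B) (g : B -> option A) (R : rules A) :
  pcancel f g -> (forall b a, g b = Some a -> f a = b) ->
  confluent R -> confluent (mapR f R).
Proof.
move=> hc hc' HC.
apply: (@conf_blocks _ _ (fun b => g b)).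
  move=> p /mapP[q _ ->] /=; rewrite all_map; apply/allP => a _ /=; by rewrite hc.
move=> w u v /(all_mapK hc') Ew; rewrite Ew => /(L_rtc hc hc') [u' [-> Hu]] /(L_rtc hc hc') [v' [-> Hv]].
have [z [H1 H2]] := HC _ _ _ Hu Hv.
by exists (map f z); split; apply: rtc_mapR.
Qed.

Lemma L_proj (A B : finType) (f : A -> B) (g : B -> option A) (R : rules A) u v :
  pcancel f g -> rstep (mapR f R) u v -> rstep R (pmap g u) (pmap g v).
Proof.
move=> hc [x [y [l [r [/mapP[[l0 r0] H [-> ->]] [-> ->]]]]]] /=.
exists (pmap g x), (pmap g y), l0, r0; split => //; by rewrite !pmap_cat !(pmap_mapK _ hc).
Qed.

Lemma L_proj0 (A B C : finType) (f : A -> B) (g' : B -> option C) (R : rules A) u v :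
  (forall a, g' (f a) = None) -> rstep (mapR f R) u v -> pmap g' u = pmap g' v.
Proof.
move=> hc [x [y [l [r [/mapP[[l0 r0] H [-> ->]] [-> ->]]]]]] /=.
by rewrite !pmap_cat !(pmap_map0 _ hc).
Qed.

Lemma noeth_nonempty (A : finType) (R : rules A) l r :
  noetherian R -> (l, r) \in R -> l != [::].
Proof.
move=> Hn H; apply/eqP => El; subst l.
have : forall u, Acc (fun v u => rstep R u v) u -> False.
  move=> u; elim=> {u} u _ IH; apply: (IH (r ++ u)).
  by exists [::], u, [::], r.
by move/(_ [::] (Hn _)).
Qed.

Definition getl (A1 A2 : Type) (c : (A1 + A2)%type) : option A1 := if c is inl a then Some a else None.
Definition getr (A1 A2 : Type) (c : (A1 + A2)%type) : option A2 := if c is inr a then Some a else None.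

Lemma rstep_catR (A : finType) (R1 R2 : rules A) u v :
  rstep (R1 ++ R2) u v -> rstep R1 u v \/ rstep R2 u v.
Proof.
move=> [x [y [l [r [H E]]]]]; move: H; rewrite mem_cat => /orP[] H.
- by left; exists x, y, l, r.
- by right; exists x, y, l, r.
Qed.

Lemma rstep_catL (A : finType) (R1 R2 : rules A) u v :
  rstep R1 u v \/ rstep R2 u v -> rstep (R1 ++ R2) u v.
Proof.
case=> [[x [y [l [r [H E]]]]]|[x [y [l [r [H E]]]]]]; exists x, y, l, r; by rewrite mem_cat H ?orbT.
Qed.

Lemma union_noeth (A1 A2 : finType) (R1 : rules A1) (R2 : rules A2) :
  noetherian R1 -> noetherian R2 -> noetherian (liftR R1 R2).
Proof.
move=> Hn1 Hn2 w.
suff gen : forall a, Acc (fun v u => rstep R1 u v) a -> forall b, Acc (fun v u => rstep R2 u v) b ->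
  forall u, pmap (@getl A1 A2) u = a -> pmap (@getr A1 A2) u = b -> Acc (fun v u => rstep (liftR R1 R2) u v) u.
  exact: gen (Hn1 _) _ (Hn2 _) w erefl erefl.
move=> a Ha; elim: Ha => {a} a Ha IHa b Hb; elim: Hb => {b} b Hb IHb u Ea Eb.
constructor => v /rstep_catR [] H.
- apply: (IHa (pmap (@getl A1 A2) v) _ b (Acc_intro _ Hb) v erefl).
  + rewrite -Ea; exact: (L_proj (f := inl) (g := @getl A1 A2)).
  + rewrite -Eb; symmetry; exact: (L_proj0 (f := inl) (g' := @getr A1 A2) _ H).
- apply: (IHb (pmap (@getr A1 A2) v) _ v _ erefl).
  + rewrite -Eb; exact: (L_proj (f := inr) (g := @getr A1 A2)).
  + rewrite -Ea; symmetry; exact: (L_proj0 (f := inr) (g' := @getl A1 A2) _ H).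
Qed.

Lemma union_comm (A1 A2 : finType) (R1 : rules A1) (R2 : rules A2) :
  noetherian R1 -> noetherian R2 ->
  forall w u v, rstep (mapR inl R1) w u -> rstep (mapR (@inr A1 A2) R2) w v ->
  exists z, rstep (mapR (@inr A1 A2) R2) u z /\ rstep (mapR inl R1) v z.
Proof.
move=> Hn1 Hn2 w u v [x1 [y1 [l1 [r1 [H1 [E1 ->]]]]]] [x2 [y2 [l2 [r2 [H2 [E2 ->]]]]]].
move: H1 H2 => /mapP[[a1 b1] H1 [El1 ->]] /mapP[[a2 b2] H2 [El2 ->]] /=.
have ne1 := noeth_nonempty Hn1 H1; have ne2 := noeth_nonempty Hn2 H2.
rewrite /= in El1 El2 ne1 ne2.
case: a1 El1 ne1 H1 => [//|d a1] El1 _ H1.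
case: a2 El2 ne2 H2 => [//|c a2] El2 _ H2.
have c1 : inr c \notin l1 by rewrite El1; apply/mapP => -[].
have d2 : inl d \notin l2 by rewrite El2; apply/mapP => -[].
have E : x1 ++ l1 ++ y1 = x2 ++ inr c :: (map inr a2 ++ y2) by rewrite -E1 E2 El2.
have [[m [Ex2 Ey1]]|[m [Ex1 Et]]] := split_redex c1 E.
- exists (x1 ++ map inl b1 ++ m ++ map inr b2 ++ y2); split.
  + exists (x1 ++ map inl b1 ++ m), y2, l2, (map inr b2); split.
      by rewrite El2; exact: (mapR_mem inr H2).
    by rewrite Ey1 El2 -!catA.
  + exists x1, (m ++ map inr b2 ++ y2), l1, (map inl b1); split.
      by rewrite El1; exact: (mapR_mem inl H1).
    by rewrite Ex2 -!catA.
- have E' : x2 ++ l2 ++ y2 = x1 ++ inl d :: (map inl a1 ++ y1) by rewrite -E2 E1 El1.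
  have [[m' [Ex1' Ey2]]|[m' [Ex2' _]]] := split_redex d2 E'.
  + exists (x2 ++ map inr b2 ++ m' ++ map inl b1 ++ y1); split.
    * exists x2, (m' ++ map inl b1 ++ y1), l2, (map inr b2); split.
        by rewrite El2; exact: (mapR_mem inr H2).
      by rewrite Ex1' -!catA.
    * exists (x2 ++ map inr b2 ++ m'), y1, l1, (map inl b1); split.
        by rewrite El1; exact: (mapR_mem inl H1).
      by rewrite Ey2 El1 -!catA.
  + have Hs1 := f_equal size Ex1; have Hs2 := f_equal size Ex2'.
    rewrite !size_cat /= in Hs1 Hs2.
    move: Hs1 Hs2; move: (size x1) (size x2) (size m) (size m') => ? ? ? ?; lia.
Qed.

Lemma getlK (A1 A2 : finType) : pcancel (@inl A1 A2) (@getl A1 A2). Proof. by []. Qed.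
Lemma getrK (A1 A2 : finType) : pcancel (@inr A1 A2) (@getr A1 A2). Proof. by []. Qed.
Lemma getlK' (A1 A2 : finType) b a : @getl A1 A2 b = Some a -> inl a = b.
Proof. by case: b => //= ? [->]. Qed.
Lemma getrK' (A1 A2 : finType) b a : @getr A1 A2 b = Some a -> inr a = b.
Proof. by case: b => //= ? [->]. Qed.

Lemma union_conf (A1 A2 : finType) (R1 : rules A1) (R2 : rules A2) :
  noetherian R1 -> noetherian R2 -> confluent R1 -> confluent R2 -> confluent (liftR R1 R2).
Proof.
move=> Hn1 Hn2 Hc1 Hc2 w u v Hu Hv.
have C1 := L_conf (@getlK A1 A2) (@getlK' A1 A2) Hc1.
have C2 := L_conf (@getrK A1 A2) (@getrK' A1 A2) Hc2.
have toU : forall a b, rtc (rstep (liftR R1 R2)) a b ->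
   rtc (fun x y => rstep (mapR inl R1) x y \/ rstep (mapR (@inr A1 A2) R2) x y) a b.
  by apply: rtc_mono => a b; apply: rstep_catR.
have fromU : forall a b,
   rtc (fun x y => rstep (mapR inl R1) x y \/ rstep (mapR (@inr A1 A2) R2) x y) a b ->
   rtc (rstep (liftR R1 R2)) a b.
  by apply: rtc_mono => a b; apply: rstep_catL.
have [z [H1 H2]] := hindley_rosen C1 C2 (union_comm Hn1 Hn2) (toU _ _ Hu) (toU _ _ Hv).
by exists z; split; apply: fromU.
Qed.

Lemma fcrs_union (M1 M2 P : monoid) (i1 : M1 -> P) (i2 : M2 -> P) :
  is_free_product i1 i2 -> FCRS M1 -> FCRS M2 -> FCRS P.
Proof.
move=> FP [A1 [R1 [Hp1 [Hn1 Hc1]]]] [A2 [R2 [Hp2 [Hn2 Hc2]]]].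
exists (A1 + A2)%type, (liftR R1 R2); split; first exact: presents_fp Hp1 Hp2 FP.
split; [exact: union_noeth|exact: union_conf].
Qed.

Theorem corollary4p3 (M1 M2 P : monoid) (i1 : M1 -> P) (i2 : M2 -> P) :
  homogeneous M1 -> homogeneous M2 -> is_free_product i1 i2 ->
  (FCRS P <-> FCRS M1 /\ FCRS M2).
Proof.
move=> H1 H2 FP; split.
- move=> HP; split; first exact: fcrs_left H2 FP HP.
  exact: fcrs_left H1 (free_product_swap FP) HP.
- by case=> F1 F2; exact: fcrs_union FP F1 F2.
Qed.
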